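(* Let $X=(x_1,\ldots,x_n)$, $\widetilde{X}=(-x_1,x_2,\ldots,x_n)$ and $X'=(x_2,\ldots,x_n)$. For any partition $\lambda\in\mathcal{E}_n$ of length $\ell\geqslant1$, $$\sum_{i=1}^{\ell}(-1)^{i-1}\,\widetilde{P}_{\lambda\smallsetminus\{\lambda_i\}}(X)\,e_{\lambda_i}(X')=\widetilde{P}_\lambda(\widetilde{X})+(-1)^{\ell+1}\widetilde{P}_\lambda(X).$$
   Context: $\mathcal{E}_n$ is the set of all (not necessarily strict) partitions with all parts $\leqslant n$. $e_k$ denotes the $k$-th elementary symmetric polynomial. For a list of variables $Y$: $\widetilde{P}_0(Y)=1$, $\widetilde{P}_i(Y)=e_i(Y)/2$ for $i>0$; for $i\geqslant j\geqslant0$, $\widetilde{P}_{i,j}(Y)=\widetilde{P}_i\widetilde{P}_j+2\sum_{k=1}^{j-1}(-1)^k\widetilde{P}_{i+k}\widetilde{P}_{j-k}+(-1)^j\widetilde{P}_{i+j}$; for a partition $\mu$ of length $m$, $\widetilde{P}_\mu(Y)=\mathrm{Pfaffian}[\widetilde{P}_{\mu_i,\mu_j}(Y)]_{1\leqslant i<j\leqslant 2\lfloor(m+1)/2\rfloor}$ (with $\mu_{m+1}=0$; $\widetilde P$ of the empty partition is $1$). $\lambda\smallsetminus\{\lambda_i\}$ denotes the partition obtained from $\lambda$ by removing its $i$-th part. *)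

(* Defs.v *)
From mathcomp Require Import all_boot all_algebra.
From mathcomp Require Export mpoly.
Set Implicit Arguments. Unset Strict Implicit. Unset Printing Implicit Defensive.
Import GRing.Theory.
Local Open Scope ring_scope.

Definition rem_at {T : Type} (i : nat) (s : seq T) : seq T := take i s ++ drop i.+1 s.

Section Ptilde.
Variable R : comAlgType rat.

Definition elsym (k : nat) (Y : seq R) : R :=
  \sum_(I : {set 'I_(size Y)} | #|I| == k) \prod_(i in I) Y`_i.

Definition Pt1 (Y : seq R) (i : nat) : R :=
  if i == 0%N then 1 else (2%:R^-1 : rat) *: elsym i Y.

Definition Pt2 (Y : seq R) (i j : nat) : R :=
  if j == 0%N then Pt1 Y i else
  Pt1 Y i * Pt1 Y j
  + 2%:R * \sum_(1 <= k < j) (-1) ^+ k * Pt1 Y (i + k) * Pt1 Y (j - k)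
  + (-1) ^+ j * Pt1 Y (i + j).

(* Pfaffian of the skew matrix [f (s_a) (s_b)]_{a<b}, by expansion along the first row *)
Fixpoint pfaux (fuel : nat) (f : nat -> nat -> R) (s : seq nat) : R :=
  match fuel, s with
  | 0%N, _ => 1
  | _, [::] => 1
  | fuel'.+1, a :: t =>
      \sum_(j < size t) (-1) ^+ j * f a (nth 0%N t j) * pfaux fuel' f (rem_at j t)
  end.

Definition pfaffian (f : nat -> nat -> R) (s : seq nat) : R := pfaux (size s) f s.

Definition Ptilde (Y : seq R) (mu : seq nat) : R :=
  pfaffian (Pt2 Y) (if odd (size mu) then rcons mu 0%N else mu).

End Ptilde.

(* Main.v *)
Require Import Defs.
From mathcomp Require Import all_boot all_algebra.
From mathcomp Require Import mpoly.
From mathcomp Require Import ring zify.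
Set Implicit Arguments. Unset Strict Implicit. Unset Printing Implicit Defensive.
Import GRing.Theory.
Local Open Scope ring_scope.

Lemma bumpE h k : bump h k = if (h <= k)%N then k.+1 else k.
Proof. by rewrite /bump; case: leqP => _; rewrite ?add1n ?add0n. Qed.
Lemma unbumpE h k : unbump h k = if (h < k)%N then k.-1 else k.
Proof. by rewrite /unbump; case: ltnP => _; rewrite ?subn1 ?subn0. Qed.
Ltac bsolve := rewrite /bump /unbump; lia.

Lemma size_rem_at {T} j (t : seq T) : (j < size t)%N -> size (rem_at j t) = (size t).-1.
Proof. rewrite /rem_at size_cat size_take size_drop => h; rewrite h; lia. Qed.

Lemma nth_rem_at {T} (x0 : T) j t k : (j < size t)%N ->
  nth x0 (rem_at j t) k = nth x0 t (bump j k).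
Proof.
move=> hj; rewrite /rem_at nth_cat size_take hj.
case: ltnP => hk.
  by rewrite nth_take // bumpE leqNgt hk.
by rewrite nth_drop bumpE hk; congr nth; lia.
Qed.

Lemma mem_rem_at {T : eqType} j (t : seq T) x : x \in rem_at j t -> x \in t.
Proof. by rewrite /rem_at mem_cat => /orP[/mem_take|/mem_drop]. Qed.

Lemma rem_at_rem_at {T} (t : seq T) j q : (j < size t)%N -> (q < size t)%N -> j != q ->
  rem_at (unbump q j) (rem_at q t) = rem_at (unbump j q) (rem_at j t).
Proof.
move=> hj hq hjq.
have hs1 : (unbump q j < size (rem_at q t))%N by rewrite size_rem_at //; bsolve.
have hs2 : (unbump j q < size (rem_at j t))%N by rewrite size_rem_at //; bsolve.
case: t hj hq hs1 hs2 => [//|x0 t'] hj hq hs1 hs2.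
apply: (@eq_from_nth _ x0).
  by rewrite (size_rem_at hs1) (size_rem_at hs2) (size_rem_at hq) (size_rem_at hj).
move=> i; rewrite (size_rem_at hs1) (size_rem_at hq) => hi.
rewrite (nth_rem_at _ _ hs1) (nth_rem_at _ _ hs2) (nth_rem_at _ _ hq) (nth_rem_at _ _ hj). congr (nth _ _ _).
move: hjq => /eqP hjq; bsolve.
Qed.

Lemma sign_swap (R : comAlgType rat) j q : j != q ->
  (-1) ^+ (q + unbump q j) = - (-1) ^+ (j + unbump j q) :> R.
Proof.
move=> /eqP hjq.
case: (ltngtP j q) => h; last by [].
- have -> : (q + unbump q j = (j + unbump j q).+1)%N by bsolve.
  by rewrite exprS mulN1r.
- have -> : (j + unbump j q = (q + unbump q j).+1)%N by bsolve.
  by rewrite exprS mulN1r opprK.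
Qed.

Section Pf.
Variable R : comAlgType rat.
Implicit Types (f : nat -> nat -> R) (v w : nat -> R) (K : seq nat -> R).

Lemma pfaux_fuel f k1 k2 s : (size s <= k1)%N -> (size s <= k2)%N ->
  pfaux k1 f s = pfaux k2 f s.
Proof.
elim: k1 k2 s => [|k1 IH] [|k2] [|a t] //= h1 h2.
apply: eq_bigr => [[j hj]] _ /=; rewrite (IH k2) // size_rem_at //; lia.
Qed.

Definition Bd v K (u : seq nat) : R :=
  \sum_(0 <= k < size u) (-1) ^+ k * v (nth 0%N u k) * K (rem_at k u).

Lemma pf_nil f : pfaffian f [::] = 1.
Proof. by []. Qed.

Lemma pf_cons f a t : pfaffian f (a :: t) = Bd (f a) (pfaffian f) t.
Proof.
rewrite /pfaffian /Bd /= big_mkord; apply: eq_bigr => j _.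
rewrite (@pfaux_fuel f (size t) (size (rem_at j t))) // size_rem_at //; lia.
Qed.

Lemma Bd_nil v K : Bd v K [::] = 0.
Proof. by rewrite /Bd big_geq. Qed.

Lemma Bd_eqK v K1 K2 t : (forall k, (k < size t)%N -> K1 (rem_at k t) = K2 (rem_at k t)) ->
  Bd v K1 t = Bd v K2 t.
Proof. by move=> h; rewrite /Bd; apply: eq_big_nat => k hk; rewrite h. Qed.

Lemma Bd_eqv v1 v2 K t : (forall k, (k < size t)%N -> v1 (nth 0%N t k) = v2 (nth 0%N t k)) ->
  Bd v1 K t = Bd v2 K t.
Proof. by move=> h; rewrite /Bd; apply: eq_big_nat => k hk; rewrite h. Qed.

Lemma Bd_linK v K1 K2 c1 c2 t :
  Bd v (fun u => c1 * K1 u + c2 * K2 u) t = c1 * Bd v K1 t + c2 * Bd v K2 t.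
Proof.
rewrite /Bd !mulr_sumr -big_split /=; apply: eq_bigr => k _; ring.
Qed.

Lemma Bd_oppK v K t : Bd v (fun u => - K u) t = - Bd v K t.
Proof. by rewrite /Bd -sumrN; apply: eq_bigr => k _; ring. Qed.

Lemma Bd_zeroK v K t : (forall k, (k < size t)%N -> K (rem_at k t) = 0) -> Bd v K t = 0.
Proof. by move=> h; rewrite /Bd big_nat big1 // => k /andP[_ hk]; rewrite h // mulr0. Qed.

Lemma Bd_cons v K a t :
  Bd v K (a :: t) = v a * K t - Bd v (fun u => K (a :: u)) t.
Proof.
rewrite /Bd /= big_nat_recl // expr0 mul1r /=.
rewrite /rem_at /= drop0; congr (_ + _).
rewrite -sumrN; apply: eq_bigr => k _.
by rewrite exprS /= !mulN1r !mulNr.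
Qed.

Lemma rem_at_rcons_lt (t : seq nat) z k : (k < size t)%N ->
  rem_at k (rcons t z) = rcons (rem_at k t) z.
Proof.
move=> hk; rewrite /rem_at -!cats1 take_cat hk drop_cat.
case: ltnP => hk2; first by rewrite catA.
have e : k.+1 = size t by apply/eqP; rewrite eqn_leq hk2 hk.
by rewrite e subnn drop0 drop_size cats0.
Qed.

Lemma rem_at_rcons_size (t : seq nat) z : rem_at (size t) (rcons t z) = t.
Proof.
by rewrite /rem_at -cats1 take_size_cat // drop_cat ltnNge leqnSn /= subSnn /= cats0.
Qed.

Lemma Bd_rcons v K t z :
  Bd v K (rcons t z) = Bd v (fun u => K (rcons u z)) t + (-1) ^+ (size t) * v z * K t.
Proof.
rewrite /Bd size_rcons big_nat_recr //=; congr (_ + _).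
  apply: eq_big_nat => k /andP[_ hk].
  by rewrite nth_rcons hk rem_at_rcons_lt.
by rewrite nth_rcons ltnn eqxx rem_at_rcons_size.
Qed.


Lemma sum_lift m j (F : nat -> R) : (j < m)%N ->
  \sum_(0 <= k < m.-1) F (bump j k) = \sum_(0 <= q < m | q != j) F q.
Proof.
case: m => // m' hj /=.
have hj' : (j <= m')%N by [].
rewrite (big_cat_nat (leq0n j) hj') (big_cat_nat (leq0n j) (ltnW hj)) /=.
rewrite [X in _ = _ + X](big_ltn_cond hj) eqxx /= big_add1 /=.
congr (_ + _).
  rewrite [RHS]big_nat_cond [LHS]big_nat_cond.
  apply: eq_big => [i|i /andP[/andP[_ hi] _]].
    by rewrite andbT; case: (ltnP i j) => h; rewrite ?andbF ?andbT // neq_ltn h.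
  by rewrite bumpE leqNgt hi.
rewrite [RHS]big_nat_cond [LHS]big_nat_cond.
apply: eq_big => [i|i /andP[/andP[hi _] _]].
  by rewrite andbT; case: (leqP j i) => h; rewrite ?andbF ?andbT //=; lia.
by rewrite bumpE hi.
Qed.

Lemma exch_neq m (H : nat -> nat -> R) :
  \sum_(0 <= j < m) \sum_(0 <= q < m | q != j) H j q =
  \sum_(0 <= q < m) \sum_(0 <= j < m | j != q) H j q.
Proof.
under eq_bigr do rewrite big_mkcond.
rewrite exchange_big_nat; apply: eq_bigr => q _.
by rewrite [RHS]big_mkcond; apply: eq_bigr => j _; rewrite eq_sym.
Qed.

Definition Gp (t : seq nat) v w K j q : R :=
  (-1) ^+ (j + unbump j q) * v (nth 0%N t j) * w (nth 0%N t q)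
  * K (rem_at (unbump j q) (rem_at j t)).

Lemma Bd2E v w K t :
  Bd v (Bd w K) t = \sum_(0 <= j < size t) \sum_(0 <= q < size t | q != j) Gp t v w K j q.
Proof.
rewrite /Bd; apply: eq_big_nat => j /andP[_ hj].
rewrite size_rem_at // mulr_sumr -(sum_lift _ hj); apply: eq_bigr => k _.
rewrite /Gp bumpK nth_rem_at // exprD; ring.
Qed.

Lemma Bd_swap v w K t : Bd v (Bd w K) t = - Bd w (Bd v K) t.
Proof.
rewrite !Bd2E exch_neq -sumrN; apply: eq_big_nat => q /andP[_ hq].
rewrite -sumrN big_nat_cond [RHS]big_nat_cond; apply: eq_bigr => j /andP[/andP[_ hj] hjq].
rewrite /Gp (sign_swap R hjq) (rem_at_rem_at hj hq hjq); ring.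
Qed.

Lemma Bd_vanish v K t : Bd v (Bd v K) t = 0.
Proof.
have h := Bd_swap v v K t.
have h2 : Bd v (Bd v K) t + Bd v (Bd v K) t = 0 by rewrite {1}h addNr.
have -> : Bd v (Bd v K) t = (2^-1 : rat) *: (Bd v (Bd v K) t + Bd v (Bd v K) t).
  by rewrite -mulr2n -scaler_nat scalerA mulVf ?scale1r.
by rewrite h2 scaler0.
Qed.

Lemma pf_odd f s : odd (size s) -> pfaffian f s = 0.
Proof.
suff H : forall n s, (size s <= n)%N -> odd (size s) -> pfaffian f s = 0 by apply: H.
elim=> [|n IH] [|a t] // hs ho; rewrite /= in hs ho.
rewrite pf_cons; apply: Bd_zeroK => k hk; apply: IH.
  rewrite size_rem_at //; lia.
rewrite size_rem_at //; move: ho hk; case: (size t) => //= m; by rewrite negbK => ->.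
Qed.

Lemma pf_rcons f u z : pfaffian f (rcons u z) = Bd (fun y => f y z) (pfaffian f) u.
Proof.
move: {-1}(size u) (leqnn (size u)) => n; elim: n u => [|n IH] [|a t] // hs; rewrite /= in hs.
- by rewrite (_ : rcons [::] z = [:: z]) // pf_cons !Bd_nil.
- by rewrite (_ : rcons [::] z = [:: z]) // pf_cons !Bd_nil.
rewrite rcons_cons pf_cons Bd_rcons Bd_cons.
rewrite (@Bd_eqK _ _ (Bd (fun y => f y z) (pfaffian f))); last first.
  by move=> k hk; apply: IH; rewrite size_rem_at //; lia.
rewrite (@Bd_eqK _ (fun u => pfaffian f (a :: u)) (Bd (f a) (pfaffian f))); last first.
  by move=> k hk; rewrite pf_cons.
rewrite Bd_swap.
case: (boolP (odd (size t))) => ho.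
  by rewrite pf_odd // !mulr0 addrC.
by rewrite -signr_odd (negbTE ho) expr0 mul1r addrC.
Qed.

Lemma pf_rank2 f g w v s :
  {in s &, forall x y, g x y = f x y + w x * v y - v x * w y} ->
  pfaffian g s = pfaffian f s + Bd w (Bd v (pfaffian f)) s.
Proof.
move: {-1}(size s) (leqnn (size s)) => n; elim: n s => [|n IH] [|a t] // hs hg; rewrite /= in hs.
- by rewrite Bd_nil addr0.
- by rewrite Bd_nil addr0.
set D := Bd w (Bd v (pfaffian f)).
rewrite !pf_cons.
have e1 : Bd (g a) (pfaffian g) t =
   Bd (fun y => f a y + w a * v y - v a * w y) (fun u => pfaffian f u + D u) t.
  rewrite /Bd; apply: eq_big_nat => k /andP[_ hk].
  have hkt : nth 0%N t k \in a :: t by rewrite in_cons mem_nth ?orbT.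
  rewrite hg ?mem_head // IH //; first by rewrite size_rem_at //; apply: leq_trans (leq_pred _) _; rewrite -ltnS.
  move=> x y hx hy; apply: hg; rewrite in_cons; apply/orP; right.
    exact: (mem_rem_at hx).
  exact: (mem_rem_at hy).
rewrite e1.
have e2 : Bd (fun y => f a y + w a * v y - v a * w y) (fun u => pfaffian f u + D u) t =
  Bd (f a) (pfaffian f) t + Bd (f a) D t + w a * Bd v (pfaffian f) t - v a * Bd w (pfaffian f) t
  + w a * Bd v D t - v a * Bd w D t.
  rewrite /Bd !mulr_sumr; do 5! first [rewrite -big_split | rewrite -sumrB]; apply: eq_bigr => k _ /=; ring.
rewrite e2.
have hwD : Bd w D t = 0 by rewrite /D Bd_vanish.
have hvD : Bd v D t = 0.
  by rewrite /D Bd_swap (@Bd_zeroK w (Bd v (Bd v (pfaffian f)))) ?oppr0 // => k _; rewrite Bd_vanish.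
have hfD : Bd (f a) D t = Bd w (Bd v (Bd (f a) (pfaffian f))) t.
  rewrite /D Bd_swap (@Bd_eqK w (Bd (f a) (Bd v (pfaffian f))) (fun u => - Bd v (Bd (f a) (pfaffian f)) u)).
    by rewrite Bd_oppK opprK.
  by move=> k _; rewrite Bd_swap.
rewrite hwD hvD hfD /D Bd_cons.
rewrite (@Bd_eqK w (fun u => Bd v (pfaffian f) (a :: u))
   (fun u => v a * pfaffian f u + (-1) * Bd v (Bd (f a) (pfaffian f)) u)); last first.
  move=> k _; rewrite Bd_cons (@Bd_eqK v (fun u => pfaffian f (a :: u)) (Bd (f a) (pfaffian f))).
    by rewrite mulN1r.
  by move=> j _; rewrite pf_cons.
rewrite Bd_linK; ring.
Qed.
End Pf.

Section Elsym.
Variable R : comAlgType rat.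

Lemma elsym0 (Y : seq R) : elsym 0 Y = 1.
Proof.
rewrite /elsym (big_pred1 set0) => [|I]; first by rewrite big_set0.
by rewrite /= cards_eq0.
Qed.

Lemma preim_lift m (J : {set 'I_m}) : [set j | lift ord0 j \in lift ord0 @: J] = J.
Proof. by apply/setP => j; rewrite inE mem_imset //; exact: lift_inj. Qed.

Lemma ord0_notin_lift m (J : {set 'I_m}) : ord0 \notin lift ord0 @: J.
Proof. by apply/imsetP => -[j _ /eqP]; rewrite (negbTE (neq_lift _ _)). Qed.

Lemma card_lift m (J : {set 'I_m}) : #|lift ord0 @: J| = #|J|.
Proof. by rewrite card_imset //; exact: lift_inj. Qed.

Lemma lift_preim m (I : {set 'I_m.+1}) :
  lift ord0 @: [set j | lift ord0 j \in I] = I :\ ord0.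
Proof.
apply/setP => i; rewrite !inE; case: (unliftP ord0 i) => [j ->|->].
  by rewrite mem_imset ?inE ?neq_lift //; exact: lift_inj.
by rewrite eqxx /=; apply/negbTE/ord0_notin_lift.
Qed.

Lemma prod_lift m (J : {set 'I_m}) (F : 'I_m.+1 -> R) :
  \prod_(i in lift ord0 @: J) F i = \prod_(j in J) F (lift ord0 j).
Proof. by rewrite big_imset //; move=> i j _ _; exact: lift_inj. Qed.

Lemma elsym_cons (y : R) Y k : elsym k.+1 (y :: Y) = elsym k.+1 Y + y * elsym k Y.
Proof.
rewrite /elsym (bigID (fun I : {set 'I_(size Y).+1} => ord0 \in I)) /= addrC; congr (_ + _).
  rewrite (reindex_onto (fun J : {set 'I_(size Y)} => lift ord0 @: J)
            (fun I => [set j | lift ord0 j \in I])) /=; last first.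
    move=> I /andP[_ hI]; rewrite lift_preim; apply/setP => i; rewrite !inE.
    by case: eqP => // ->; rewrite (negbTE hI).
  apply: eq_big => [J|J _].
    by rewrite card_lift preim_lift eqxx ord0_notin_lift !andbT.
  by rewrite prod_lift; apply: eq_bigr => j _; rewrite lift0.
rewrite mulr_sumr.
rewrite (reindex_onto (fun J : {set 'I_(size Y)} => ord0 |: (lift ord0 @: J))
          (fun I => [set j | lift ord0 j \in I])) /=; last first.
  move=> I /andP[_ hI]; rewrite lift_preim setD1K //.
apply: eq_big => [J|J _].
  rewrite setU11 andbT cardsU1 ord0_notin_lift card_lift add1n eqSS.
  have -> : [set j | lift ord0 j \in ord0 |: lift ord0 @: J] = J.
    apply/setP => j; rewrite !inE eq_sym (negbTE (neq_lift _ _)) /= mem_imset //; exact: lift_inj.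
  by rewrite eqxx andbT.
by rewrite big_setU1 ?ord0_notin_lift //= prod_lift.
Qed.

End Elsym.

Section Entries.
Variable R : comAlgType rat.
Variables (x : R) (Y : seq R).

Definition hh : R := (2^-1 : rat) *: 1.

Lemma hh2 : 1 - 2%:R * hh = 0.
Proof.
rewrite /hh -scaler_nat -scalerAl mul1r scalerA mulfV ?scale1r ?subrr //.
Qed.

Lemma eq_mod_h (P Q Z : R) : P - Q = (1 - 2%:R * hh) * Z -> P = Q.
Proof. by rewrite hh2 mul0r => /eqP; rewrite subr_eq0 => /eqP. Qed.

Lemma Pt1_S (Z : seq R) k : Pt1 Z k.+1 = hh * elsym k.+1 Z.
Proof. by rewrite /Pt1 /= /hh -scalerAl mul1r. Qed.

Lemma telesc (T : nat -> R) j :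
  \sum_(1 <= k < j.+1) (-1) ^+ k * (T k + T k.-1) = (-1) ^+ j * T j - T 0%N.
Proof.
elim: j => [|j IH]; first by rewrite big_geq // expr0 mul1r subrr.
rewrite big_nat_recr //= IH exprS; ring.
Qed.

Let fY k := elsym k Y.

Lemma PX_S k : Pt1 (x :: Y) k.+1 = hh * (fY k.+1 + x * fY k).
Proof. by rewrite Pt1_S elsym_cons. Qed.
Lemma PXt_S k : Pt1 (- x :: Y) k.+1 = hh * (fY k.+1 - x * fY k).
Proof. by rewrite Pt1_S elsym_cons mulNr. Qed.

Lemma E2 i : Pt2 (- x :: Y) i.+1 0 = fY i.+1 - Pt1 (x :: Y) i.+1.
Proof.
rewrite /Pt2 /= PXt_S PX_S; apply: (@eq_mod_h _ _ (- fY i.+1)); ring.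
Qed.

Lemma E1 i j : Pt2 (- x :: Y) i.+1 j.+1 =
  Pt2 (x :: Y) i.+1 j.+1 + fY i.+1 * Pt1 (x :: Y) j.+1 - Pt1 (x :: Y) i.+1 * fY j.+1.
Proof.
rewrite /Pt2 /=.
set T := fun k => fY (i.+1 + k) * fY (j - k).
have HS : \sum_(1 <= k < j.+1) (-1) ^+ k * Pt1 (- x :: Y) (i.+1 + k) * Pt1 (- x :: Y) (j.+1 - k)
  = \sum_(1 <= k < j.+1) (-1) ^+ k * Pt1 (x :: Y) (i.+1 + k) * Pt1 (x :: Y) (j.+1 - k)
    - hh * x * ((-1) ^+ j * T j - T 0%N).
  rewrite -telesc mulr_sumr -sumrB; apply: eq_big_nat => k /andP[hk1 hk2].
  have e1 : (i.+1 + k = (i + k).+1)%N by lia.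
  have e2 : (j.+1 - k = (j - k).+1)%N by lia.
  have e3 : (i.+1 + k.-1 = i + k)%N by lia.
  have e4 : (j - k.-1 = (j - k).+1)%N by lia.
  rewrite /T e1 e2 e3 e4 !PXt_S !PX_S.
  apply: (@eq_mod_h _ _ ((-1) ^+ k * hh * x * (fY (i + k).+1 * fY (j - k) + fY (i + k) * fY (j - k).+1))).
  ring.
rewrite HS /T subn0 addn0 subnn.
have e5 : (i.+1 + j = (i + j).+1)%N by lia.
have e6 : (i.+1 + j.+1 = (i + j.+1).+1)%N by lia.
have e7 : (i + j.+1 = (i + j).+1)%N by lia.
have f0 : fY 0 = 1 by exact: elsym0.
rewrite e5 e6 !PXt_S !PX_S e7 f0 exprS.
apply: (@eq_mod_h _ _ (hh * x * (fY i.+1 * fY j + fY i * fY j.+1))).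
ring.
Qed.

End Entries.

Section Main.
Variable R : comAlgType rat.
Variables (x : R) (Y : seq R).

Lemma main_gen (lam : seq nat) : all (fun p => 0 < p)%N lam ->
  \sum_(i < size lam)
     (-1) ^+ i * Ptilde (x :: Y) (rem_at i lam) * elsym (nth 0%N lam i) Y
  = Ptilde (- x :: Y) lam + (-1) ^+ (size lam).+1 * Ptilde (x :: Y) lam.
Proof.
move=> hpos.
set A := Pt2 (x :: Y); set At := Pt2 (- x :: Y); set P := Pt1 (x :: Y).
set fY := fun k => elsym k Y.
have hg : {in lam &, forall a b, At a b = A a b + fY a * P b - P a * fY b}.
  move=> a b ha hb; move: (allP hpos a ha) (allP hpos b hb).
  by case: a {ha} => // a; case: b {hb} => // b _ _; rewrite /At /A /P E1.
have hgk : forall k, (k < size lam)%N ->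
    {in rem_at k lam &, forall a b, At a b = A a b + fY a * P b - P a * fY b}.
  by move=> k _ a b ha hb; apply: hg; apply: mem_rem_at; [exact: ha | exact: hb].
have hA0 : forall y, A y 0%N = P y by [].
rewrite -(big_mkord xpredT (fun i => (-1) ^+ i * Ptilde (x :: Y) (rem_at i lam) * elsym (nth 0%N lam i) Y)).
case: (boolP (odd (size lam))) => ho.
- rewrite /Ptilde ho -signr_odd /= ho /= expr0 mul1r.
  rewrite -/A -/At !pf_rcons.
  set D := Bd fY (Bd P (pfaffian A)).
  have hD1 : Bd fY D lam = 0 by rewrite /D Bd_vanish.
  have hD2 : Bd P D lam = 0.
    by rewrite /D Bd_swap (@Bd_zeroK _ fY (Bd P (Bd P (pfaffian A)))) ?oppr0 // => k _; rewrite Bd_vanish.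
  have eR : Bd (fun y => At y 0%N) (pfaffian At) lam + Bd (fun y => A y 0%N) (pfaffian A) lam
      = Bd fY (pfaffian A) lam + Bd fY D lam - Bd P D lam.
    rewrite /Bd; do 3! first [rewrite -big_split | rewrite -sumrB]; apply: eq_big_nat => k /andP[_ hk] /=.
    rewrite (pf_rank2 (hgk k hk)) -/D hA0.
    have := allP hpos _ (mem_nth 0%N hk); case: (nth 0%N lam k) => // m _.
    rewrite /At E2 -/P /fY; ring.
  clearbody D; rewrite eR hD1 hD2 subr0 addr0 /Bd; apply: eq_big_nat => i /andP[_ hi].
  have -> : odd (size (rem_at i lam)) = false.
    by rewrite size_rem_at //; move: ho hi; case: (size lam) => //= m /negbTE ->.
  by rewrite /fY; ring.
- rewrite /Ptilde (negbTE ho) -signr_odd /= (negbTE ho) /= expr1 mulN1r.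
  rewrite -/A -/At (pf_rank2 hg) addrAC subrr add0r /Bd.
  apply: eq_big_nat => i /andP[_ hi].
  have -> : odd (size (rem_at i lam)) = true.
    by rewrite size_rem_at //; move: ho hi; case: (size lam) => //= m; case: (odd m).
  rewrite -/A pf_rcons (@Bd_eqv _ (fun y => A y 0%N) P) // /Bd /fY; ring.
Qed.

End Main.

Unset Implicit Arguments.
Set Strict Implicit.

Theorem proposition7 (n : nat) (hn : (0 < n)%N) (lam : seq nat)
  (hsorted : sorted geq lam)
  (hparts : all (fun p => (0 < p <= n)%N) lam)
  (hlen : (1 <= size lam)%N) :
  let X : seq {mpoly rat[n]} := [seq 'X_i | i <- enum 'I_n] in
  let Xt : seq {mpoly rat[n]} := - X`_0 :: behead X in
  let X' : seq {mpoly rat[n]} := behead X in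
  \sum_(i < size lam)
     (-1) ^+ i * Ptilde X (rem_at i lam) * elsym (nth 0%N lam i) X'
  = Ptilde Xt lam + (-1) ^+ (size lam).+1 * Ptilde X lam.
Proof.
move=> X Xt X'; rewrite /Xt /X'; clear Xt X'.
have hs : (0 < size X)%N by rewrite /X size_map size_enum_ord.
have hpos : all (fun p => 0 < p)%N lam.
  by apply: sub_all hparts => p /andP[].
clearbody X; case: X hs => // a s _ /=.
exact: main_gen.
Qed.
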